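(* For positive integers $b,n$ and a nonnegative integer $c$, $$M_n(1,b,c)=M_{n-1}(c+1,b,c).$$
   Context: $$M_n(a,b,c):=\operatorname{CT}_x\prod_{i=1}^n(1-x_i)^{-b}x_i^{-a+1}\prod_{1\le i<j\le n}(x_j-x_i)^{-c},$$ where $\operatorname{CT}_x=\operatorname{CT}_{x_n}\cdots\operatorname{CT}_{x_1}$ is iterated constant-term extraction, $(1-x_i)^{-b}$ is expanded as a power series in $x_i$, and for $i<j$, $(x_j-x_i)^{-c}=x_j^{-c}(1-x_i/x_j)^{-c}$ is expanded as a power series in $x_i/x_j$. For $n=0$ the empty product gives $M_0=1$. *)

(* Defs.v *)
From mathcomp Require Import all_boot all_order all_algebra.
From mathcomp Require Import classical_sets fsbigop.

Set Implicit Arguments.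
Unset Strict Implicit.
Unset Printing Implicit Defensive.
Import GRing.Theory.

(* M_n(a,b,c) = CT of  prod_i (1-x_i)^{-b} x_i^{1-a} prod_{i<j} (x_j-x_i)^{-c},
   with (1-x_i)^{-b} = sum_{m>=0} C(b+m-1,m) x_i^m  and
   (x_j-x_i)^{-c} = sum_{k>=0} C(c+k-1,k) x_i^k x_j^{-c-k}.
   Choosing one term from every factor is an exponent datum
   e = (m, k) with m : 'I_n -> nat and k : 'I_n * 'I_n -> nat (only the
   entries k (i,j) with i < j are used, the others are required to be 0).
   The iterated constant term is the (finite) sum over all such data whose
   total exponent in every variable x_i is 0 of the product of the
   chosen coefficients. *)

Definition exps (n : nat) := ({ffun 'I_n -> nat} * {ffun 'I_n * 'I_n -> nat})%type.

Definition exponent_of (n : nat) (a : int) (c : nat) (e : exps n) (i : 'I_n) : int :=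
  ((e.1 i)%:Z + (1 - a)
   + (\sum_(j : 'I_n | (i < j)%N) (e.2 (i, j))%:Z)
   - (\sum_(j : 'I_n | (j < i)%N) ((c + e.2 (j, i))%N)%:Z))%R.

Definition balanced (n : nat) (a : int) (c : nat) (e : exps n) : bool :=
  [forall i : 'I_n, forall j : 'I_n, (j <= i)%N ==> (e.2 (i, j) == 0%N)] &&
  [forall i : 'I_n, exponent_of a c e i == 0%R].

Definition weight (n b c : nat) (e : exps n) : nat :=
  ((\prod_(i : 'I_n) 'C((b + e.1 i).-1, e.1 i))
   * (\prod_(p : 'I_n * 'I_n | (p.1 < p.2)%N) 'C((c + e.2 p).-1, e.2 p)))%N.

Definition M (n : nat) (a : int) (b c : nat) : nat :=
  \big[addn/0%N]_(e \in [set e : exps n | balanced a c e]%classic) weight b c e.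

(* Main.v *)
Require Import Defs.
From mathcomp Require Import all_boot all_order all_algebra.
From mathcomp Require Import classical_sets functions fsbigop.
From mathcomp Require Import ring.

Set Implicit Arguments.
Unset Strict Implicit.
Unset Printing Implicit Defensive.
Import GRing.Theory.

Lemma prod_pairs m (G : 'I_m * 'I_m -> nat) :
  (\prod_(p : 'I_m * 'I_m | (p.1 < p.2)%N) G p = \prod_(i : 'I_m) \prod_(j : 'I_m) (if (i < j)%N then G (i, j) else 1))%N.
Proof.
rewrite big_mkcond (pair_bigA _ (fun (i j : 'I_m) => if (i < j)%N then G (i, j) else 1%N)).
by apply: eq_bigr => -[i j] _.
Qed.

Section S.
Variable n : nat.

Definition ext1 (f : {ffun 'I_n -> nat}) : {ffun 'I_n.+1 -> nat} :=
  [ffun i => if unlift ord0 i is Some i' then f i' else 0%N].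
Definition ext2 (f : {ffun 'I_n * 'I_n -> nat}) : {ffun 'I_n.+1 * 'I_n.+1 -> nat} :=
  [ffun p => match unlift ord0 p.1, unlift ord0 p.2 with
             | Some i, Some j => f (i, j) | _, _ => 0%N end].
Definition hx (e : exps n) : exps n.+1 := (ext1 e.1, ext2 e.2).

Lemma ext1_0 f : ext1 f ord0 = 0%N.
Proof. by rewrite ffunE unlift_none. Qed.
Lemma ext1_l f i : ext1 f (lift ord0 i) = f i.
Proof. by rewrite ffunE liftK. Qed.
Lemma ext2_0l f j : ext2 f (ord0, j) = 0%N.
Proof. by rewrite ffunE /= unlift_none. Qed.
Lemma ext2_0r f j : ext2 f (j, ord0) = 0%N.
Proof. by rewrite ffunE /= unlift_none; case: unlift. Qed.
Lemma ext2_l f i j : ext2 f (lift ord0 i, lift ord0 j) = f (i, j).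
Proof. by rewrite ffunE /= !liftK. Qed.


Lemma sum_gt (f : {ffun 'I_n * 'I_n -> nat}) (i : 'I_n) :
  (\sum_(j : 'I_n.+1 | (lift ord0 i < j)%N) (ext2 f (lift ord0 i, j))%:Z
   = \sum_(j : 'I_n | (i < j)%N) (f (i, j))%:Z)%R.
Proof.
rewrite (big_mkcond (fun j : 'I_n.+1 => (lift ord0 i < j)%N)) big_ord_recl /=.
rewrite add0r [RHS]big_mkcond; apply: eq_bigr => j _.
by rewrite ext2_l /bump /= !add1n ltnS.
Qed.

Lemma sum_lt c (f : {ffun 'I_n * 'I_n -> nat}) (i : 'I_n) :
  (\sum_(j : 'I_n.+1 | (j < lift ord0 i)%N) ((c + ext2 f (j, lift ord0 i))%N)%:Z
   = c%:Z + \sum_(j : 'I_n | (j < i)%N) ((c + f (j, i))%N)%:Z)%R.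
Proof.
rewrite (big_mkcond (fun j : 'I_n.+1 => (j < lift ord0 i)%N)) big_ord_recl /=.
rewrite ext2_0l addn0 [in RHS]big_mkcond; congr (_ + _)%R; apply: eq_bigr => j _.
by rewrite ext2_l /bump /= !add1n ltnS.
Qed.

Lemma exp_lift (a : int) c e i :
  exponent_of a c (hx e) (lift ord0 i) = exponent_of (a + c%:Z) c e i.
Proof.
rewrite /exponent_of /= ext1_l sum_gt sum_lt.
ring.
Qed.

Lemma exp_0 (a : int) c e :
  exponent_of a c (hx e) ord0 = (1 - a)%R.
Proof.
rewrite /exponent_of /= ext1_0 big1 ?big_pred0 //.
  by rewrite add0r addr0 subr0.
by move=> j _; rewrite ext2_0l.
Qed.


Lemma bal_hx c e : balanced 1 c (hx e) = balanced (1 + c%:Z) c e.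
Proof.
rewrite /balanced; congr (_ && _).
  apply/forallP/forallP => H i.
    apply/forallP => j; have := forallP (H (lift ord0 i)) (lift ord0 j).
    by rewrite /= ext2_l /bump /= !add1n ltnS.
  apply/forallP => j /=.
  case: (unliftP ord0 i) => [i' ->|->]; case: (unliftP ord0 j) => [j' ->|->];
    rewrite ?ext2_0l ?ext2_0r ?implybT //.
    rewrite /= ext2_l /bump /= leq_add2l; exact: (forallP (H i') j').
apply/forallP/forallP => H i.
  by rewrite -exp_lift; exact: H.
case: (unliftP ord0 i) => [i' ->|->]; first by rewrite exp_lift.
by rewrite exp_0 subrr.
Qed.


Lemma weight_hx b c e : weight b c (hx e) = weight b c e.
Proof.
rewrite /weight /= !prod_pairs; congr (_ * _)%N.
  rewrite big_ord_recl ext1_0 bin0 mul1n.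
  by apply: eq_bigr => i _; rewrite ext1_l.
rewrite big_ord_recl big1 ?mul1n; last first.
  by move=> j _; rewrite ext2_0l bin0; case: ifP.
apply: eq_bigr => i _; rewrite big_ord_recl ext2_0r bin0 ?if_same mul1n.
by apply: eq_bigr => j _; rewrite ext2_l /bump /= ltn_add2l.
Qed.

End S.

Theorem corollary5p8 (b n c : nat) (hb : (0 < b)%N) (hn : (0 < n)%N) :
  M n 1%R b c = M n.-1 (c.+1)%:Z b c.
Proof.
case: n hn => // n _ /=.
have Ec : Posz c.+1 = (1 + c%:Z)%R by rewrite -PoszD add1n.
rewrite /M (reindex_fsbig (@hx n) [set e | balanced (Posz c.+1) c e]
                                  [set e | balanced 1 c e]).
  by apply: eq_fsbigr => e _; rewrite weight_hx.
split.
- by move=> e /= He; rewrite bal_hx -Ec.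
- move=> [f1 g1] [f2 g2] _ _ [H1 H2]; congr (_, _); apply/ffunP.
    by move=> i; rewrite -(ext1_l f1) H1 ext1_l.
  by move=> [i j]; rewrite -(ext2_l g1) H2 ext2_l.
move=> [f g] /= He.
have He' := He.
move/andP: He' => [/forallP H1 /forallP H2].
have Hk0' : forall j, g (j, ord0) = 0%N.
  by move=> j; apply/eqP; have := forallP (H1 j) ord0.
have E0 := eqP (H2 ord0).
have S0 : (\sum_(j < n.+1 | (j < @ord0 n)%N) (Posz (c + g (j, ord0))%N) = 0)%R.
  by rewrite big_pred0.
rewrite /exponent_of /= subrr addr0 S0 subr0 in E0.
rewrite -(big_morph Posz PoszD (erefl _)) -PoszD in E0.
case: E0 => /eqP; rewrite addn_eq0 sum_nat_eq0 => /andP [/eqP Hm0 /forallP Hk].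
have Hk0 : forall j, g (ord0, j) = 0%N.
  move=> j; case: (posnP j) => [j0|jp].
    by apply/eqP; have := forallP (H1 ord0) j; rewrite j0 leqnn.
  by apply/eqP; have := Hk j; rewrite jp.
pose r : exps n := ([ffun i => f (lift ord0 i)],
                    [ffun p => g (lift ord0 p.1, lift ord0 p.2)]).
have Hr : hx r = (f, g).
  rewrite /hx /=; congr (_, _); apply/ffunP.
    by move=> i; rewrite ffunE; case: (unliftP ord0 i) => [i' ->|->] //; rewrite ffunE.
  move=> [i j]; rewrite ffunE /=.
  case: (unliftP ord0 i) => [i' ->|->]; case: (unliftP ord0 j) => [j' ->|->] //; rewrite ?ffunE //.
exists r => //.
by rewrite /= Ec -bal_hx Hr.
Qed.
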